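(* Let $\mathcal{F}\subseteq\mathcal{P}(\omega)$ be a free filter and let $D\subseteq(-1,1)^\omega$ be a countable set. Then there exists a homeomorphism $h\colon Q\to Q$ of $Q=[-1,1]^\omega$ such that $h[D]$ is in general position, $h[(-1,1)^\omega]=(-1,1)^\omega$ and $h[K_\mathcal{F}]=K_\mathcal{F}$.
   Context: A filter on $\omega$ is free if it contains all cofinite sets. $Q=[-1,1]^\omega$ has the product topology. $K_\mathcal{F}=\{f\in Q:\forall m\in\omega\ \{n\in\omega:|f(n)|<2^{-m}\}\in\mathcal{F}\}$. A set $X\subseteq Q$ is in general position if for all $x,y\in X$ with $x\ne y$ one has $x(n)\ne y(n)$ for every $n\in\omega$. *)

(* Defs.v *)
From HB Require Import structures.
From mathcomp Require Import all_boot all_order all_algebra.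
From mathcomp Require Import all_classical all_reals all_analysis.
Unset Strict Implicit. Unset Printing Implicit Defensive.
Import Order.TTheory GRing.Theory Num.Theory.
Import numFieldNormedType.Exports.
Local Open Scope classical_set_scope.
Local Open Scope ring_scope.

Definition cubeQ (R : realType) : set {ptws nat -> R} :=
  [set f | forall n : nat, -1 <= f n <= 1].

Definition openCube (R : realType) : set {ptws nat -> R} :=
  [set f | forall n : nat, -1 < f n < 1].

Definition free_filter (F : set_system nat) : Prop :=
  ProperFilter F /\ (forall A : set nat, finite_set (~` A) -> F A).

Definition K_F (R : realType) (F : set_system nat) : set {ptws nat -> R} :=
  [set f | cubeQ R f /\ forall m : nat, F [set n | `|f n| < 2 ^- m]].

Definition general_position (R : realType) (X : set {ptws nat -> R}) : Prop :=
  X `<=` cubeQ R /\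
  forall x y, X x -> X y -> x <> y -> forall n : nat, x n <> y n.

Definition homeomorphism_of (T : topologicalType) (A : set T) (h : T -> T) : Prop :=
  exists g : T -> T,
    (forall x, A x -> A (h x)) /\ (forall y, A y -> A (g y)) /\
    (forall x, A x -> g (h x) = x) /\ (forall y, A y -> h (g y) = y) /\
    {within A, continuous h} /\ {within A, continuous g}.
Arguments homeomorphism_of {T}.

(* Main.v *)
Require Import Defs.
From HB Require Import structures.
From mathcomp Require Import all_boot all_order all_algebra.
From mathcomp Require Import all_classical all_reals all_analysis.
From mathcomp Require Import ring lra.
Import Order.TTheory GRing.Theory Num.Theory.
Import numFieldNormedType.Exports.
Local Open Scope classical_set_scope.
Local Open Scope ring_scope.

Section Phi.
Variable R : realType.
Implicit Types t u c : R.

Definition Phi t c : R := t + c * (1 - `|t|).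
Definition Phinv u c : R :=
  (u - c + `|u - c|) / 2 / (1 - c) + (u - c - `|u - c|) / 2 / (1 + c).

Lemma Phi0 t : Phi t 0 = t.
Proof. by rewrite /Phi mul0r addr0. Qed.

Lemma Phinv0 u : Phinv u 0 = u.
Proof. by rewrite /Phinv !subr0 addr0 !divr1; field. Qed.

Lemma Phinv_pos u c : -1 < c < 1 -> c <= u -> Phinv u c = (u - c) / (1 - c).
Proof.
move=> /andP[c1 c2] cu; rewrite /Phinv ger0_norm ?subr_ge0 // subrr mul0r mul0r addr0.
have h : 1 - c != 0 by rewrite gt_eqF //; lra.
by field.
Qed.

Lemma Phinv_neg u c : -1 < c < 1 -> u < c -> Phinv u c = (u - c) / (1 + c).
Proof.
move=> /andP[c1 c2] cu; rewrite /Phinv ltr0_norm ?subr_lt0 // opprK subrr mul0r mul0r add0r.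
have h : 1 + c != 0 by rewrite gt_eqF //; lra.
by field.
Qed.

Lemma Phi_pos t c : 0 <= t -> Phi t c = c + t * (1 - c).
Proof. by move=> t0; rewrite /Phi ger0_norm //; lra. Qed.

Lemma Phi_neg t c : t < 0 -> Phi t c = c + t * (1 + c).
Proof. by move=> t0; rewrite /Phi ltr0_norm //; lra. Qed.

Lemma PhiK t c : -1 < c < 1 -> Phinv (Phi t c) c = t.
Proof.
move=> /[dup] hc /andP[c1 c2]; case: (leP 0 t) => t0.
  rewrite Phi_pos // Phinv_pos //; last by nra.
  by rewrite addrC addKr mulfK //; lra.
rewrite Phi_neg // Phinv_neg //; last by nra.
by rewrite addrC addKr mulfK //; lra.
Qed.

Lemma PhinvK u c : -1 < c < 1 -> Phi (Phinv u c) c = u.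
Proof.
move=> /[dup] hc /andP[c1 c2]; case: (leP c u) => cu.
  rewrite Phinv_pos // Phi_pos ?divr_ge0 //; try lra.
  by rewrite divfK; lra.
rewrite Phinv_neg // Phi_neg; last by rewrite pmulr_llt0 ?invr_gt0; lra.
by rewrite divfK; lra.
Qed.

Lemma Phi_in t c : -1 < c < 1 -> -1 <= t <= 1 -> -1 <= Phi t c <= 1.
Proof.
move=> /andP[c1 c2] /andP[t1 t2]; case: (leP 0 t) => t0.
  by rewrite Phi_pos //; apply/andP; split; nra.
by rewrite Phi_neg //; apply/andP; split; nra.
Qed.

Lemma Phi_open t c : -1 < c < 1 -> -1 <= t <= 1 ->
  (-1 < Phi t c < 1) = (-1 < t < 1).
Proof.
move=> /andP[c1 c2] /andP[t1 t2]; case: (leP 0 t) => t0.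
  rewrite Phi_pos //; apply/idP/idP => /andP[a b]; apply/andP; split; nra.
rewrite Phi_neg //; apply/idP/idP => /andP[a b]; apply/andP; split; nra.
Qed.

Lemma Phi_dist t c : -1 <= t <= 1 -> `|Phi t c - t| <= `|c|.
Proof.
move=> /andP[t1 t2]; rewrite /Phi addrC addKr normrM.
rewrite -[leRHS]mulr1 ler_wpM2l // ger0_norm; last first.
  by rewrite subr_ge0; case: (leP 0 t) => t0; [rewrite ger0_norm|rewrite ltr0_norm]; lra.
by rewrite lerBlDr lerDl.
Qed.

Lemma Phinv_in u c : -1 < c < 1 -> -1 <= u <= 1 -> -1 <= Phinv u c <= 1.
Proof.
move=> /[dup] hc /andP[c1 c2] /andP[u1 u2]; case: (leP c u) => cu.
  rewrite Phinv_pos // ; apply/andP; split.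
    by rewrite (le_trans _ (divr_ge0 _ _)) //; lra.
  by rewrite ler_pdivrMr; lra.
rewrite Phinv_neg //; apply/andP; split.
  by rewrite ler_pdivlMr; lra.
by rewrite (le_trans (y := 0)) // pmulr_lle0 ?invr_gt0; lra.
Qed.

Lemma Phinv_open u c : -1 < c < 1 -> -1 <= u <= 1 ->
  (-1 < Phinv u c < 1) = (-1 < u < 1).
Proof.
move=> hc hu; have := Phi_open (Phinv u c) c hc (Phinv_in u c hc hu); rewrite PhinvK // => ->.
Qed.

Lemma Phinv_dist u c : -1 < c < 1 -> -1 <= u <= 1 -> `|Phinv u c - u| <= `|c|.
Proof.
move=> hc hu; rewrite -{2}(PhinvK u c hc) distrC; apply: Phi_dist; exact: Phinv_in.
Qed.

Lemma Phi_sep a b p q l : -1 < a < 1 -> -1 < b < 1 -> p != q ->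
  Phi a (l * p) = Phi b (l * q) ->
  l = - (a - b) / (p * (1 - `|a|) - q * (1 - `|b|)).
Proof.
move=> ha hb pq E.
have E' : (a - b) + l * (p * (1 - `|a|) - q * (1 - `|b|)) = 0.
  by transitivity (Phi a (l * p) - Phi b (l * q)); [rewrite /Phi; ring | rewrite E subrr].
have cnz : p * (1 - `|a|) - q * (1 - `|b|) != 0.
  apply/eqP => c0; move: E'; rewrite c0 mulr0 addr0 => /eqP; rewrite subr_eq0 => /eqP ab.
  move: c0; rewrite ab -mulrBl => /eqP; rewrite mulf_eq0 subr_eq0 (negbTE pq) /=.
  have : `|b| < 1 by rewrite ltr_norml; case/andP: hb => -> ->.
  by move=> hb1; rewrite subr_eq0 => /eqP h; move: hb1; rewrite -h ltxx.
apply: (mulIf cnz); rewrite divfK //.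
by rewrite -[RHS]addr0 -E'; ring.
Qed.


Local Notation X := {ptws nat -> R}.

End Phi.
Arguments Phi {R}.
Arguments Phinv {R}.
Section Phi2.
Variable R : realType.
Local Notation X := {ptws nat -> R}.

Lemma coord_cvg (G : set_system X) (x : X) n : Filter G -> G --> x ->
  (fun y : X => y n) @ G --> x n.
Proof.
move=> FG Gx; apply: (cvg_trans _ (@proj_continuous nat (fun _ => R) n x)).
exact: cvg_fmap2.
Qed.

Lemma Phi_cvg (T : Type) (G : set_system T) (f g : T -> R) (t c : R) : Filter G ->
  f @ G --> t -> g @ G --> c -> (fun y => Phi (f y) (g y)) @ G --> Phi t c.
Proof.
move=> FG ft gc; apply: cvgD => //; apply: cvgM => //; apply: cvgB.
  exact: cvg_cst.
exact: cvg_norm.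
Qed.

Lemma Phinv_cvg (T : Type) (G : set_system T) (f g : T -> R) (t c : R) : Filter G ->
  -1 < c < 1 ->
  f @ G --> t -> g @ G --> c -> (fun y => Phinv (f y) (g y)) @ G --> Phinv t c.
Proof.
move=> FG /andP[c1 c2] ft gc.
have dc : (fun y => f y - g y) @ G --> t - c by apply: cvgB.
have nd : (fun y => `|f y - g y|) @ G --> `|t - c| by apply: cvg_norm.
apply: cvgD => //; apply: cvgM => //.
- apply: cvgM => //; [apply: cvgD => // | exact: cvg_cst].
- by apply: cvgV; [rewrite subr_eq0 gt_eqF // | apply: cvgB => //; exact: cvg_cst].
- apply: cvgM => //; [apply: cvgB => // | exact: cvg_cst].
- by apply: cvgV; [rewrite gt_eqF //; lra | apply: cvgD => //; exact: cvg_cst].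
Qed.

End Phi2.

Section Gen.
Variable R : realType.
Local Notation X := {ptws nat -> R}.
Local Notation cube := (cubeQ R).

Definition goodF (f : X -> X) := forall (x : X) (G : set_system X),
  cube x -> Filter G -> G --> x -> G cube -> f @ G --> f x.

Definition Mp (a : X -> nat -> R) (x : X) : X := fun n => Phi (x n) (a x n).
Definition Mi (a : X -> nat -> R) (y : X) : X := fun n => Phinv (y n) (a y n).

Variable a : X -> nat -> R.
Hypothesis Ha1 : forall x, cube x -> forall n, -1 < a x n < 1.
Hypothesis Ha2 : forall x, cube x -> a (Mp a x) = a x.
Hypothesis Ha3 : forall y, cube y -> a (Mi a y) = a y.
Hypothesis Ha4 : forall (x : X) (G : set_system X), cube x -> Filter G -> G --> x ->
  G cube -> forall n, (fun y => a y n) @ G --> a x n.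

Lemma Mp_cube x : cube x -> cube (Mp a x).
Proof. by move=> cx n; apply: Phi_in => //; apply: Ha1. Qed.

Lemma Mi_cube x : cube x -> cube (Mi a x).
Proof. by move=> cx n; apply: Phinv_in => //; apply: Ha1. Qed.

Lemma Mp_open x : openCube R x -> openCube R (Mp a x).
Proof.
move=> ox; have cx : cube x by move=> n; case/andP: (ox n) => /ltW -> /ltW ->.
by move=> n; rewrite /Mp Phi_open //; apply: Ha1.
Qed.

Lemma Mi_open x : openCube R x -> openCube R (Mi a x).
Proof.
move=> ox; have cx : cube x by move=> n; case/andP: (ox n) => /ltW -> /ltW ->.
by move=> n; rewrite /Mi Phinv_open //; apply: Ha1.
Qed.

Lemma MpK x : cube x -> Mi a (Mp a x) = x.
Proof.
move=> cx; apply/funext => n; rewrite /Mi Ha2 //.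
by rewrite /Mp PhiK //; apply: Ha1.
Qed.

Lemma MiK y : cube y -> Mp a (Mi a y) = y.
Proof.
move=> cy; apply/funext => n; rewrite /Mp Ha3 //.
by rewrite /Mi PhinvK //; apply: Ha1.
Qed.

Lemma Mp_good : goodF (Mp a).
Proof.
move=> x G cx FG Gx Gc; apply/pointwise_cvgP => n.
apply: Phi_cvg; [exact: coord_cvg | exact: Ha4].
Qed.

Lemma Mi_good : goodF (Mi a).
Proof.
move=> x G cx FG Gx Gc; apply/pointwise_cvgP => n.
apply: Phinv_cvg; [exact: Ha1 | exact: coord_cvg | exact: Ha4].
Qed.

Lemma Mp_dist x n : cube x -> `|Mp a x n - x n| <= `|a x n|.
Proof. by move=> cx; apply: Phi_dist. Qed.

Lemma Mi_dist x n : cube x -> `|Mi a x n - x n| <= `|a x n|.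
Proof. by move=> cx; apply: Phinv_dist => //; apply: Ha1. Qed.

End Gen.
Arguments goodF {R}. Arguments Mp {R}. Arguments Mi {R}.
Arguments Mp_cube {R a}.
Arguments Mi_cube {R a}.
Arguments Mp_open {R a}.
Arguments Mi_open {R a}.
Arguments MpK {R a}.
Arguments MiK {R a}.
Arguments Mp_good {R a}.
Arguments Mi_good {R a}.
Arguments Mp_dist {R a}.
Arguments Mi_dist {R a}.

Section Misc.
Variable R : realType.
Local Notation X := {ptws nat -> R}.
Local Notation cube := (cubeQ R).

Lemma goodF_comp (f g : X -> X) : goodF f -> goodF g ->
  (forall x, cube x -> cube (f x)) -> goodF (g \o f).
Proof.
move=> gf gg fc x G cx FG Gx Gc.
apply: (gg (f x) (f @ G)) => //; first exact: fc.
  exact: gf.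
have H : G (f @^-1` cube) by apply: filterS Gc => y /fc.
exact: H.
Qed.

Lemma goodF_cont (f : X -> X) : goodF f -> {within cube, continuous f}.
Proof.
move=> gf; apply/subspace_continuousP => x cx; apply: gf => //.
  exact: cvg_within.
exact: withinT.
Qed.

Lemma pow2_le m n : (m <= n)%N -> (2 : R) ^- n <= 2 ^- m.
Proof.
move=> mn; rewrite lef_pV2 ?posrE ?exprn_gt0 //.
by rewrite ler_eXn2l // ltr1n.
Qed.

Lemma pow2S m : (2 : R) ^- m.+1 + 2 ^- m.+1 = 2 ^- m.
Proof.
have h : (2:R) ^+ m != 0 by rewrite expf_neq0 // pnatr_eq0.
by rewrite exprS; field.
Qed.

Lemma KF_move (F : set_system nat) (f f' : X) : free_filter F ->
  K_F R F f -> cube f' -> (forall n, (0 < n)%N -> `|f' n - f n| <= 2 ^- n) ->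
  K_F R F f'.
Proof.
move=> [PF Fcof] [cf Kf] cf' d; split => // m.
have F1 : F [set n | (m < n)%N].
  apply: Fcof; apply: (@sub_finite_set _ _ `I_m.+1); last exact: finite_II.
  by move=> n /=; rewrite ltnNge => /negP; rewrite negbK.
apply: filterS (filterI (Kf m.+1) F1) => n [/= fn mn].
rewrite -(subrK (f n) (f' n)); apply: (le_lt_trans (ler_normD _ _)).
rewrite -pow2S; apply: ler_ltD => //.
apply: (le_trans (d n (leq_ltn_trans (leq0n m) mn))); exact: pow2_le.
Qed.

Lemma KF_eq (F : set_system nat) (h g : X -> X) : free_filter F ->
  (forall x, cube x -> cube (h x)) -> (forall y, cube y -> cube (g y)) ->
  (forall y, cube y -> h (g y) = y) ->
  (forall x, cube x -> forall n, (0 < n)%N -> `|h x n - x n| <= 2 ^- n) ->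
  (forall y, cube y -> forall n, (0 < n)%N -> `|g y n - y n| <= 2 ^- n) ->
  h @` K_F R F = K_F R F.
Proof.
move=> FF hc gc hg dh dg; apply/seteqP; split.
  move=> _ [x Kx <-]; have [cx _] := Kx.
  by apply: (@KF_move F x (h x) FF Kx); [apply: hc | apply: dh].
move=> y Ky; have [cy _] := Ky; exists (g y); last exact: hg.
by apply: (@KF_move F y (g y) FF Ky); [apply: gc | apply: dg].
Qed.

Lemma avoid_ex (S : set R) (a : R) : countable S -> 0 < a ->
  exists v, 0 < v < a /\ ~ S v.
Proof.
move=> cS a0; apply/not_existsP => H.
have sub : [set` `]0, a[] `<=` S.
  move=> v /=; rewrite in_itv /= => va; have := H v.
  by move=> /not_andP [] // /contrapT.
have : countable [set` `]0, a[].
  exact: (sub_countable (subset_card_le sub) cS).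
move/countable_lebesgue_measure0; rewrite lebesgue_measure_itv /= lte_fin a0.
move=> h; move: h a0; rewrite EFinN sube0 => -[] ->; by rewrite ltxx.
Qed.

Definition avoid (S : set R) (a : R) : R :=
  match pselect (exists v, 0 < v < a /\ ~ S v) with
  | left H => projT1 (cid H) | right _ => 0 end.

Lemma avoidP S a : countable S -> 0 < a -> 0 < avoid S a < a /\ ~ S (avoid S a).
Proof.
move=> cS a0; rewrite /avoid; case: pselect => [H|]; last by move/(_ (avoid_ex S a cS a0)).
by case: (cid H).
Qed.

Lemma countable_img2 (S : set R) (r : nat -> nat -> R) :
  (forall v, S v -> exists i j, v = r i j) -> countable S.
Proof.
move=> H; apply: (@sub_countable _ _ _ ((fun p : nat * nat => r p.1 p.2) @` setT)).
  apply: subset_card_le => v /H [i [j ->]]; by exists (i, j).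
exact: (card_le_trans (card_image_le _ _) (countableP _)).
Qed.

Lemma enum_countable (D : set X) : countable D -> D `<=` openCube R ->
  exists e : nat -> X, (forall i, openCube R (e i)) /\ D `<=` range e.
Proof.
move=> /countable_injP [f finj] Do.
have /choice [e He] : forall n : nat, exists x : X,
    openCube R x /\ ((exists y, D y /\ f y = n) -> D x /\ f x = n).
  move=> n; case: (pselect (exists y, D y /\ f y = n)) => [[y [Dy fy]]|N].
    by exists y; split; [exact: Do | by []].
  exists (fun _ => 0); split => // k; by rewrite /= (@ltrN10 R) ltr01.
exists e; split; first by move=> i; case: (He i).
move=> x Dx; exists (f x) => //.
have [_ /(_ (ex_intro _ x (conj Dx erefl))) [Dy fy]] := He (f x).
by apply: finj => //; rewrite inE.
Qed.

End Misc.
Arguments avoid {R}. Arguments avoidP {R}.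

Section StepA.
Variable R : realType.
Local Notation X := {ptws nat -> R}.
Local Notation cube := (cubeQ R).
Variable e : nat -> X.
Hypothesis eo : forall i, openCube R (e i).

Definition S (w : nat -> R) (x : X) : nat -> R := series (fun m => w m * x m.+1).
Definition alpha i j := e i 0 - e j 0.
Definition ai i := 1 - `|e i 0%N|.
Definition Pij (w : nat -> R) i j k := alpha i j + ai i * S w (e i) k - ai j * S w (e j) k.
Definition beta i j m := e i m.+1 * ai i - e j m.+1 * ai j.

Lemma PS w i j k : Pij w i j k.+1 = Pij w i j k + w k * beta i j k.
Proof. by rewrite /Pij /S !seriesSr /beta; ring. Qed.

Lemma S_eq w w' x k : (forall m, (m < k)%N -> w m = w' m) -> S w x k = S w' x k.
Proof.
move=> H; rewrite /S /series /=; apply: eq_big_nat => m /andP[_ mk]; by rewrite H.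
Qed.

Lemma P_eq w w' i j k : (forall m, (m < k)%N -> w m = w' m) -> Pij w i j k = Pij w' i j k.
Proof. by move=> H; rewrite /Pij (S_eq w w' (e i) k H) (S_eq w w' (e j) k H). Qed.

Definition Bad (w : nat -> R) k : set R :=
  [set v | exists i j, beta i j k != 0 /\ Pij w i j k + v * beta i j k = 0].

Lemma Bad_countable w k : countable (Bad w k).
Proof.
apply: (@countable_img2 R _ (fun i j => - Pij w i j k / beta i j k)).
move=> v [i [j [b0 E]]]; exists i, j.
by apply: (mulIf b0); rewrite divfK //; apply/eqP; rewrite -subr_eq0 opprK addrC E.
Qed.

Fixpoint fmin (g : nat -> R) n : R := if n is n'.+1 then Num.min (fmin g n') (g n') else 1.

Lemma fmin_pos g n : (forall i, 0 < g i) -> 0 < fmin g n.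
Proof. by move=> gp; elim: n => //= n IH; rewrite lt_min IH gp. Qed.

Lemma fmin_le g n i : (i < n)%N -> fmin g n <= g i.
Proof.
elim: n => // n IH; rewrite ltnS leq_eqVlt => /orP[/eqP ->|lt] /=; rewrite ge_min.
  by rewrite lexx orbT.
by rewrite IH.
Qed.

Definition Gm w k i j := if Pij w i j k == 0 then 1 else `|Pij w i j k| / 4.
Definition Mm w k := fmin (fun i => fmin (fun j => Gm w k i j) k) k.

Lemma Gm_pos w k i j : 0 < Gm w k i j.
Proof.
rewrite /Gm; case: eqP => // /eqP h; by rewrite divr_gt0 // normr_gt0.
Qed.

Lemma Mm_pos w k : 0 < Mm w k.
Proof. by apply: fmin_pos => i; apply: fmin_pos => j; apply: Gm_pos. Qed.

Lemma Mm_le w k i j : (i < k)%N -> (j < k)%N -> Mm w k <= Gm w k i j.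
Proof.
move=> ik jk; apply: (le_trans (fmin_le _ _ _ ik)); exact: fmin_le.
Qed.

Arguments Mm : simpl never.

Definition step (k : nat) (s : (nat -> R) * R) : (nat -> R) * R :=
  let v := avoid (Bad s.1 k) (s.2 / 2) in
  let w' := fun m => if m == k then v else s.1 m in
  (w', Num.min (Num.min (s.2 / 2) (k.+1%:R^-1)) (Mm w' k.+1)).

Fixpoint st k : (nat -> R) * R := if k is k'.+1 then step k' (st k') else (fun _ => 0, 1/2).

Definition wA m := (st m.+1).1 m.
Definition eps k := (st k).2.

Lemma eps_pos k : 0 < eps k.
Proof.
elim: k => [|k IH]; first by rewrite /eps /= divr_gt0.
by rewrite /eps /= lt_min Mm_pos andbT lt_min divr_gt0 // invr_gt0 ltr0n.
Qed.

Lemma eps_half k : eps k.+1 <= eps k / 2.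
Proof. by rewrite /eps /= !ge_min lexx. Qed.

Lemma eps_inv k : eps k.+1 <= k.+1%:R^-1.
Proof. by rewrite /eps /= !ge_min lexx orbT. Qed.

Lemma stab k m : (m < k)%N -> (st k).1 m = wA m.
Proof.
elim: k => // k IH; rewrite ltnS leq_eqVlt => /orP[/eqP ->|lt] //.
by rewrite /= ifN ?IH // neq_ltn lt.
Qed.

Lemma wA_def k : wA k = avoid (Bad (st k).1 k) (eps k / 2).
Proof. by rewrite /wA /= eqxx. Qed.

Lemma wA_bounds k : 0 < wA k < eps k / 2 /\ ~ Bad (st k).1 k (wA k).
Proof.
rewrite wA_def; apply: avoidP; first exact: Bad_countable.
by rewrite divr_gt0 // eps_pos.
Qed.

Lemma wA_pos k : 0 <= wA k.
Proof. by have [/andP[/ltW ? _] _] := wA_bounds k. Qed.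

Lemma P_st i j k : Pij wA i j k = Pij (st k).1 i j k.
Proof. by apply: P_eq => m mk; rewrite stab. Qed.

Lemma avoidance i j k : beta i j k != 0 -> Pij wA i j k.+1 != 0.
Proof.
move=> b0; rewrite PS P_st; apply/eqP => E.
have [_ nb] := wA_bounds k; apply: nb; exists i, j; split => //.
Qed.

Lemma margin i j k : (i < k.+1)%N -> (j < k.+1)%N -> Pij wA i j k.+1 != 0 ->
  eps k.+1 <= `|Pij wA i j k.+1| / 4.
Proof.
move=> ik jk P0; rewrite P_st in P0 *.
have := Mm_le (st k.+1).1 k.+1 i j ik jk; rewrite /Gm (negbTE P0) => h.
apply: le_trans h; by rewrite /eps /= ge_min lexx orbT.
Qed.

Lemma tail k n : (k <= n)%N -> \sum_(k <= m < n) wA m + eps n <= eps k.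
Proof.
elim: n => [|n IH]; first by rewrite leqn0 => /eqP ->; rewrite big_geq // add0r.
rewrite leq_eqVlt => /orP[/eqP ->|]; first by rewrite big_geq // add0r.
rewrite ltnS => kn; rewrite big_nat_recr //=; apply: le_trans (IH kn).
have [/andP[_ h] _] := wA_bounds n; have := eps_half n.
rewrite -addrA lerD2l; lra.
Qed.


Lemma cube_norm (x : X) n : cube x -> `|x n| <= 1.
Proof. by move=> cx; rewrite ler_norml; exact: cx. Qed.

Lemma S0 w x : S w x 0 = 0.
Proof. by rewrite /S /series /= big_geq. Qed.

Lemma S_diff x k n : cube x -> (k <= n)%N ->
  `|S wA x n - S wA x k| <= \sum_(k <= m < n) wA m.
Proof.
move=> cx kn; rewrite /S sub_series_geq //; apply: le_trans (ler_norm_sum _ _ _) _.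
apply: ler_sum => m _; rewrite normrM (ger0_norm (wA_pos m)).
by rewrite -[leRHS]mulr1 ler_wpM2l ?wA_pos // cube_norm.
Qed.

Lemma S_tail x k n : cube x -> (k <= n)%N -> `|S wA x n - S wA x k| <= eps k.
Proof.
move=> cx kn; apply: le_trans (S_diff _ _ _ cx kn) _; have := tail _ _ kn; have := eps_pos n.
lra.
Qed.

Lemma S_cvg x : cube x -> cvgn (S wA x).
Proof.
move=> cx; apply: normed_cvg; apply: (@series_le_cvg _ _ wA).
- by move=> n /=; exact: normr_ge0.
- exact: wA_pos.
- by move=> n /=; rewrite normrM (ger0_norm (wA_pos n)) -[leRHS]mulr1 ler_wpM2l ?wA_pos // cube_norm.
apply: nondecreasing_is_cvgn.
  move=> a b ab; rewrite /series /=.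
  exact: (@nondecreasing_series R wA xpredT 0 (fun n _ _ => wA_pos n) a b ab).
exists (eps 0) => _ [n _ <-]; have := tail _ _ (leq0n n); have := eps_pos n.
rewrite /series /=; lra.
Qed.

Definition cA (x : X) := limn (S wA x).

Lemma cA_near x k : cube x -> `|cA x - S wA x k| <= eps k.
Proof.
move=> cx; have cv := S_cvg x cx.
have h : (fun n => `|S wA x n - S wA x k|) @ \oo --> `|cA x - S wA x k|.
  by apply: cvg_norm; apply: cvgB => //; exact: cvg_cst.
rewrite -(cvg_lim _ h) //; apply: limr_le; first exact: (cvgP _ h).
by exists k => // n /= kn; apply: S_tail.
Qed.

Lemma cA_bound x : cube x -> `|cA x| <= 1 / 2.
Proof. by move=> cx; have := cA_near x 0 cx; rewrite S0 subr0. Qed.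

Lemma S_cont (x : X) (G : set_system X) k : Filter G -> G --> x ->
  (fun y => S wA y k) @ G --> S wA x k.
Proof.
move=> FG Gx; elim: k => [|k IH].
  have -> : (fun y => S wA y 0) = fun _ => 0 by apply/funext => y; rewrite S0.
  rewrite S0; exact: cvg_cst.
have -> : (fun y : X => S wA y k.+1) = (fun y => S wA y k + wA k * y k.+1).
  by apply/funext => y; rewrite /S seriesSr.
rewrite /S seriesSr; apply: cvgD => //; apply: cvgM; first exact: cvg_cst.
exact: coord_cvg.
Qed.

Lemma cA_cont (x : X) (G : set_system X) : cube x -> Filter G -> G --> x -> G cube ->
  cA @ G --> cA x.
Proof.
move=> cx FG Gx Gc; apply/cvgrPdist_lt => r r0.
have [k hk] : exists k, eps k < r / 4.
  exists (Num.Def.trunc (4 / r)).+1; apply: le_lt_trans (eps_inv _) _.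
  rewrite -[r / 4]invrK ltf_pV2 ?posrE ?invr_gt0 ?divr_gt0 ?ltr0n //.
  by rewrite invf_div truncnS_gt.
have Hs := proj1 (cvgrPdist_lt _ _) (S_cont x G k FG Gx) (r / 2) (divr_gt0 r0 (ltr0n R 2)).
near=> y.
have cy : cube y by near: y; exact: Gc.
have hy : `|S wA x k - S wA y k| < r / 2 by near: y; exact: Hs.
have h1 := cA_near x k cx; have h2 := cA_near y k cy.
have tri : `|cA x - cA y| <= `|cA x - S wA x k| + `|S wA x k - S wA y k| + `|cA y - S wA y k|.
  rewrite [X in X <= _](_ : _ = `|(cA x - S wA x k) + (S wA x k - S wA y k) + - (cA y - S wA y k)|); last by congr `|_|; ring.
  by apply: le_trans (ler_normD _ _) _; rewrite normrN lerD2r ler_normD.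
lra.
Unshelve. all: by end_near.
Qed.


Lemma eo_cube i : cube (e i).
Proof. by move=> n; case/andP: (eo i n) => /ltW -> /ltW ->. Qed.

Lemma ai_bounds i : 0 < ai i <= 1.
Proof.
rewrite /ai; have : `|e i 0%N| < 1 by rewrite ltr_norml; exact: eo.
have := normr_ge0 (e i 0%N); lra.
Qed.

Lemma diff_near i j k :
  `|(alpha i j + ai i * cA (e i) - ai j * cA (e j)) - Pij wA i j k| <= 2 * eps k.
Proof.
have -> : (alpha i j + ai i * cA (e i) - ai j * cA (e j)) - Pij wA i j k =
  ai i * (cA (e i) - S wA (e i) k) - ai j * (cA (e j) - S wA (e j) k).
  by rewrite /Pij; ring.
apply: le_trans (ler_normB _ _) _; rewrite !normrM.
have [a1 a2] := andP (ai_bounds i); have [b1 b2] := andP (ai_bounds j).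
rewrite (gtr0_norm a1) (gtr0_norm b1).
have h1 := cA_near (e i) k (eo_cube i); have h2 := cA_near (e j) k (eo_cube j).
have n1 := normr_ge0 (cA (e i) - S wA (e i) k); have n2 := normr_ge0 (cA (e j) - S wA (e j) k).
nra.
Qed.

Lemma P_const i j k : (forall m, beta i j m = 0) -> Pij wA i j k = alpha i j.
Proof.
move=> b0; elim: k => [|k IH]; first by rewrite /Pij !S0; ring.
by rewrite PS IH b0 mulr0 addr0.
Qed.

Lemma P_eventually i j : e i <> e j -> exists k0, forall k, (k0 <= k)%N -> Pij wA i j k != 0.
Proof.
move=> nij; case: (pselect (exists m, beta i j m != 0)) => [[m bm]|N].
  exists m.+1 => k mk; rewrite -(subnKC mk); elim: (k - m.+1)%N => [|d IH].
    by rewrite addn0; apply: avoidance.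
  rewrite addnS; case: (eqVneq (beta i j (m.+1 + d)) 0) => bd.
    by rewrite PS bd mulr0 addr0.
  exact: avoidance.
have b0 : forall m, beta i j m = 0.
  by move=> m; apply/eqP; apply: contrapT => h; apply: N; exists m; apply/negP.
exists 0%N => k _; rewrite P_const //; apply/eqP => a0; apply: nij.
have e0 : e i 0%N = e j 0%N by apply/eqP; rewrite -subr_eq0; apply/eqP.
apply/funext => n; case: n => // n; have := b0 n; rewrite /beta /ai e0.
move=> /eqP; rewrite -mulrBl mulf_eq0 => /orP[|]; first by rewrite subr_eq0 => /eqP.
have := ai_bounds j; rewrite /ai => /andP[h _] /eqP h'; by rewrite h' ltxx in h.
Qed.

Lemma injA i j : e i <> e j -> Phi (e i 0%N) (cA (e i)) <> Phi (e j 0%N) (cA (e j)).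
Proof.
move=> nij E; have [k0 hk0] := P_eventually i j nij.
set k := maxn k0 (maxn i j).
have Pk : Pij wA i j k.+1 != 0 by apply: hk0; rewrite leqW // leq_maxl.
have ik : (i < k.+1)%N by rewrite ltnS /k (leq_trans (leq_maxl i j)) // leq_maxr.
have jk : (j < k.+1)%N by rewrite ltnS /k (leq_trans (leq_maxr i j)) // leq_maxr.
have mg := margin i j k ik jk Pk.
have dn := diff_near i j k.+1.
have z : alpha i j + ai i * cA (e i) - ai j * cA (e j) = 0.
  by rewrite -(subrr (Phi (e j 0%N) (cA (e j)))) -{1}E /Phi /alpha /ai; ring.
rewrite z sub0r normrN in dn.
have : 0 < `|Pij wA i j k.+1| by rewrite normr_gt0.
lra.
Qed.

End StepA.

Section Main.
Variable R : realType.
Local Notation X := {ptws nat -> R}.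
Local Notation cube := (cubeQ R).
Variable e : nat -> X.
Hypothesis eo : forall i, openCube R (e i).

Definition aA (x : X) (n : nat) : R := if n is 0%N then @cA R e x else 0.

Lemma aA1 x : cube x -> forall n, -1 < aA x n < 1.
Proof.
move=> cx [|n] /=; last by rewrite ltrN10 ltr01.
have := @cA_bound R e x cx; rewrite ler_norml => /andP[h1 h2]; apply/andP; split; lra.
Qed.

Lemma cA_coord (x y : X) : (forall n, x n.+1 = y n.+1) -> @cA R e x = @cA R e y.
Proof.
move=> h; rewrite /cA /S; congr (limn (series _)); apply/funext => m; by rewrite h.
Qed.

Lemma aA2 x : cube x -> aA (Mp aA x) = aA x.
Proof.
move=> cx; apply/funext => -[|n] //=; apply: cA_coord => n.
by rewrite /Mp /= Phi0.
Qed.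

Lemma aA3 x : cube x -> aA (Mi aA x) = aA x.
Proof.
move=> cx; apply/funext => -[|n] //=; apply: cA_coord => n.
by rewrite /Mi /= Phinv0.
Qed.

Lemma aA4 (x : X) (G : set_system X) : cube x -> Filter G -> G --> x ->
  G cube -> forall n, (fun y => aA y n) @ G --> aA x n.
Proof.
move=> cx FG Gx Gc [|n] /=; last exact: cvg_cst.
exact: cA_cont.
Qed.

Definition hA := Mp aA.

Definition BadB (n : nat) : set R := [set l | exists i j,
  hA (e i) 0%N != hA (e j) 0%N /\
  Phi (e i n) (l * hA (e i) 0%N) = Phi (e j n) (l * hA (e j) 0%N)].

Lemma BadB_countable n : countable (BadB n).
Proof.
apply: (@countable_img2 R _ (fun i j => - (e i n - e j n) /
   (hA (e i) 0%N * (1 - `|e i n|) - hA (e j) 0%N * (1 - `|e j n|)))).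
move=> l [i [j [nq E]]]; exists i, j; exact: Phi_sep (eo i n) (eo j n) nq E.
Qed.

Definition lam (n : nat) : R := avoid (BadB n) (2 ^- n).

Lemma lamP n : 0 < lam n < 2 ^- n /\ ~ BadB n (lam n).
Proof. by apply: avoidP; [exact: BadB_countable | rewrite invr_gt0 exprn_gt0]. Qed.

Definition aB (x : X) (n : nat) : R := if n is 0%N then 0 else lam n * x 0%N.

Lemma aB_norm x n : cube x -> `|aB x n| <= 2 ^- n.
Proof.
move=> cx; case: n => [|n] /=; first by rewrite normr0 invr_ge0 exprn_ge0.
have [/andP[l0 l1] _] := lamP n.+1.
rewrite normrM (gtr0_norm l0); apply: le_trans (ltW l1).
by rewrite -[leRHS]mulr1 ler_wpM2l ?(ltW l0) // cube_norm.
Qed.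

Lemma aB1 x : cube x -> forall n, -1 < aB x n < 1.
Proof.
move=> cx [|n]; first by rewrite /= ltrN10 ltr01.
have h := aB_norm x n.+1 cx; have h2 := pow2_le R 1 n.+1 (ltn0Sn n).
have : `|aB x n.+1| < 1 by apply: (le_lt_trans h); apply: (le_lt_trans h2); rewrite expr1 invf_lt1 // ltr1n.
by rewrite ltr_norml.
Qed.


Lemma aB2 x : cube x -> aB (Mp aB x) = aB x.
Proof. by move=> cx; apply/funext => -[|n] //=; rewrite /Mp /= Phi0. Qed.

Lemma aB3 x : cube x -> aB (Mi aB x) = aB x.
Proof. by move=> cx; apply/funext => -[|n] //=; rewrite /Mi /= Phinv0. Qed.

Lemma aB4 (x : X) (G : set_system X) : cube x -> Filter G -> G --> x ->
  G cube -> forall n, (fun y => aB y n) @ G --> aB x n.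
Proof.
move=> cx FG Gx Gc [|n] /=; first exact: cvg_cst.
apply: cvgM; first exact: cvg_cst.
exact: coord_cvg.
Qed.

Definition hB := Mp aB.
Definition hh (x : X) : X := hB (hA x).
Definition gg (y : X) : X := Mi aA (Mi aB y).

Lemma hh_cube x : cube x -> cube (hh x).
Proof. by move=> cx; apply: (Mp_cube aB1); apply: (Mp_cube aA1). Qed.

Lemma gg_cube x : cube x -> cube (gg x).
Proof. by move=> cx; apply: (Mi_cube aA1); apply: (Mi_cube aB1). Qed.

Lemma hhK x : cube x -> gg (hh x) = x.
Proof.
move=> cx; rewrite /gg /hh /hB (MpK aB1 aB2) ?(MpK aA1 aA2) //.
exact: (Mp_cube aA1).
Qed.

Lemma ggK y : cube y -> hh (gg y) = y.
Proof.
move=> cy; rewrite /gg /hh /hA /hB (MiK aA1 aA3) ?(MiK aB1 aB3) //.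
exact: (Mi_cube aB1).
Qed.

Lemma hh_good : goodF hh.
Proof.
apply: goodF_comp; [exact: (Mp_good aA4) | exact: (Mp_good aB4) | exact: (Mp_cube aA1)].
Qed.

Lemma gg_good : goodF gg.
Proof.
apply: goodF_comp; [exact: (Mi_good aB1 aB4) | exact: (Mi_good aA1 aA4) | exact: (Mi_cube aB1)].
Qed.

Lemma hh_open x : openCube R x -> openCube R (hh x).
Proof. by move=> ox; apply: (Mp_open aB1); apply: (Mp_open aA1). Qed.

Lemma gg_open x : openCube R x -> openCube R (gg x).
Proof. by move=> ox; apply: (Mi_open aA1); apply: (Mi_open aB1). Qed.

Lemma hh_dist x : cube x -> forall n, (0 < n)%N -> `|hh x n - x n| <= 2 ^- n.
Proof.
move=> cx [//|n] _; have cA' := Mp_cube aA1 x cx.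
have -> : x n.+1 = hA x n.+1 by rewrite /hA /Mp /= Phi0.
apply: le_trans (Mp_dist _ _ cA') _; exact: aB_norm.
Qed.

Lemma gg_dist y : cube y -> forall n, (0 < n)%N -> `|gg y n - y n| <= 2 ^- n.
Proof.
move=> cy [//|n] _.
have -> : gg y n.+1 = Mi aB y n.+1 by rewrite /gg /Mi /= Phinv0.
apply: le_trans (Mi_dist aB1 _ _ cy) _; exact: aB_norm.
Qed.

Lemma hh_sep i j : e i <> e j -> forall n, hh (e i) n <> hh (e j) n.
Proof.
move=> nij n; have inj := @injA R e eo i j nij.
have h0 : forall k, hA (e k) 0%N = Phi (e k 0%N) (@cA R e (e k)) by [].
case: n => [|n].
  by rewrite /hh /hB /Mp /= !Phi0.
rewrite /hh /hB /Mp /= -!/(Mp aA _) -!/(hA _) => E.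
have [_ nb] := lamP n.+1; apply: nb; exists i, j; split.
  by rewrite !h0; apply/eqP.
by move: E; rewrite /hA /Mp /= !Phi0.
Qed.

End Main.

Theorem mainTheorem12 (R : realType) (F : set_system nat)
  (D : set {ptws nat -> R}) :
  free_filter F -> D `<=` openCube R -> countable D ->
  exists h : {ptws nat -> R} -> {ptws nat -> R},
    homeomorphism_of (cubeQ R) h /\
    general_position R (h @` D) /\
    h @` openCube R = openCube R /\
    h @` K_F R F = K_F R F.
Proof.
move=> FF Do cD; have [e [eo De]] := @enum_countable R D cD Do.
have o2c : forall x : {ptws nat -> R}, openCube R x -> cubeQ R x.
  by move=> x ox n; case/andP: (ox n) => /Order.POrderTheory.ltW -> /Order.POrderTheory.ltW ->.
exists (@hh R e); split; [|split; [|split]].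
- exists (@gg R e); split; [|split; [|split; [|split; [|split]]]].
  + exact: (@hh_cube R e eo).
  + exact: (@gg_cube R e eo).
  + exact: (@hhK R e eo).
  + exact: (@ggK R e eo).
  + exact: (@goodF_cont R _ (@hh_good R e)).
  + exact: (@goodF_cont R _ (@gg_good R e eo)).
- split.
    by move=> _ [x Dx <-]; apply: (@hh_cube R e eo); apply: o2c; exact: Do.
  move=> _ _ [x Dx <-] [y Dy <-] nxy n.
  have [i _ ei] := De x Dx; have [j _ ej] := De y Dy; subst x y.
  by apply: (@hh_sep R e eo i j) => E; apply: nxy; rewrite E.
- apply/seteqP; split; first by move=> _ [x ox <-]; exact: (@hh_open R e eo).
  move=> y oy; exists (@gg R e y); first exact: (@gg_open R e eo).
  by apply: (@ggK R e eo); exact: o2c.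
- apply: KF_eq FF _ _ _ _ _.
  + exact: (@hh_cube R e eo).
  + exact: (@gg_cube R e eo).
  + exact: (@ggK R e eo).
  + exact: (@hh_dist R e).
  + exact: (@gg_dist R e).
Qed.
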